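(* If a group $G$ acts specially on a quasi-median graph $X$, then every vertex-stabiliser of this action is trivial.
   Context: A connected simplicial graph $X$ is quasi-median if it contains neither $K_4^-$ (the complete graph on four vertices minus an edge) nor $K_{3,2}$ as an induced subgraph, and satisfies: (triangle condition) for all vertices $a,x,y$ with $x,y$ adjacent and $d(a,x)=d(a,y)$, there is a vertex $z$ adjacent to both $x,y$ with $d(a,z)=d(a,x)-1$; (quadrangle condition) for all vertices $a,x,y,z$ with $z$ adjacent to both $x$ and $y$ and $d(a,x)=d(a,y)=d(a,z)-1$, there is a vertex $w$ adjacent to both $x,y$ with $d(a,w)=d(a,z)-2$. A square is an induced 4-cycle. A hyperplane is an equivalence class of edges for the transitive closure of the relation ''the two edges lie in a common triangle, or are opposite sides of a square''. The sectors of a hyperplane $J$ are the connected components of the graph obtained from $X$ by removing the interiors of all edges of $J$; $\mathscr{S}(J)$ denotes the set of sectors of $J$. The carrier $N(J)$ is the subgraph spanned by the edges of $J$. Two hyperplanes $J_1,J_2$ are transverse if there exist edges $e_1\in J_1$, $e_2 \in J_2$ which are two consecutive sides of a square; two distinct hyperplanes are tangent if they are not transverse and $N(J_1)\cap N(J_2)\neq\emptyset$. For a group $G$ acting by graph automorphisms on $X$, $\mathfrak{S}(J)$ denotes the image of $\mathrm{stab}_G(J)$ in the permutation group of $\mathscr{S}(J)$. The action is hyperplane-special if it is faithful and: (1) for every hyperplane $J$ and every $g\in G$ with $gJ\neq J$, $J$ and $gJ$ are neither transverse nor tangent; (2) for all transverse hyperplanes $J_1,J_2$ and every $g\in G$,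 $J_1$ and $gJ_2$ are not tangent. The action is special if it is hyperplane-special and, for every hyperplane $J$, the action $\mathfrak{S}(J)\curvearrowright\mathscr{S}(J)$ is free. *)

(* Defs.v *)
(* graphs and groups may be infinite, so everything is Prop-valued. *)
From Stdlib Require Import Relations Arith.

Set Implicit Arguments.

Section Graphs.
Variable V : Type.
Variable adj : V -> V -> Prop.

Definition simplicial : Prop :=
  (forall x y, adj x y -> adj y x) /\ (forall x, ~ adj x x).

Inductive walk : nat -> V -> V -> Prop :=
| walk0 : forall x, walk 0 x x
| walkS : forall n x z y, adj x z -> walk n z y -> walk (S n) x y.

Definition connected : Prop := forall x y, exists n, walk n x y.

Definition dist (x y : V) (n : nat) : Prop :=
  walk n x y /\ forall m, walk m x y -> n <= m.

Definition induced_K4minus (a b c d : V) : Prop :=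
  c <> d /\ adj a b /\ adj a c /\ adj a d /\ adj b c /\ adj b d /\ ~ adj c d.

Definition induced_K32 (x1 x2 x3 y1 y2 : V) : Prop :=
  x1 <> x2 /\ x1 <> x3 /\ x2 <> x3 /\ y1 <> y2 /\
  adj x1 y1 /\ adj x1 y2 /\ adj x2 y1 /\ adj x2 y2 /\ adj x3 y1 /\ adj x3 y2 /\
  ~ adj x1 x2 /\ ~ adj x1 x3 /\ ~ adj x2 x3 /\ ~ adj y1 y2.

Definition triangle_condition : Prop :=
  forall a x y n, adj x y -> dist a x n -> dist a y n ->
    exists z, adj z x /\ adj z y /\ dist a z (n - 1).

Definition quadrangle_condition : Prop :=
  forall a x y z n, x <> y -> adj z x -> adj z y ->
    dist a x n -> dist a y n -> dist a z (S n) ->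
    exists w, adj w x /\ adj w y /\ dist a w (n - 1).

Definition quasi_median : Prop :=
  simplicial /\ connected /\
  (forall a b c d, ~ induced_K4minus a b c d) /\
  (forall x1 x2 x3 y1 y2, ~ induced_K32 x1 x2 x3 y1 y2) /\
  triangle_condition /\ quadrangle_condition.

Definition square (a b c d : V) : Prop :=
  adj a b /\ adj b c /\ adj c d /\ adj d a /\ a <> c /\ b <> d /\
  ~ adj a c /\ ~ adj b d.

Definition triangle (a b c : V) : Prop := adj a b /\ adj b c /\ adj a c.

(** edges are represented by ordered pairs (darts); same_edge identifies
    the two orientations of an (unordered) edge *)
Definition same_edge (e f : V * V) : Prop :=
  (fst e = fst f /\ snd e = snd f) \/ (fst e = snd f /\ snd e = fst f).

Definition is_side_of_triangle (e : V * V) (a b c : V) : Prop :=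
  same_edge e (a, b) \/ same_edge e (b, c) \/ same_edge e (a, c).

Definition hrel (e f : V * V) : Prop :=
  adj (fst e) (snd e) /\ adj (fst f) (snd f) /\
  ( same_edge e f
  \/ (exists a b c, triangle a b c /\ is_side_of_triangle e a b c /\
                    is_side_of_triangle f a b c)
  \/ (exists a b c d, square a b c d /\ same_edge e (a, b) /\ same_edge f (c, d)) ).

Definition hequiv : relation (V * V) := clos_refl_trans (V * V) hrel.

(** hyperplanes as (symmetric) sets of edges: J x y means the edge {x,y} is in J *)
Definition hyperplane_of (x0 y0 : V) : V -> V -> Prop :=
  fun x y => adj x y /\ hequiv (x0, y0) (x, y).

Definition heq (J1 J2 : V -> V -> Prop) : Prop :=
  forall x y, J1 x y <-> J2 x y.

Definition is_hyperplane (J : V -> V -> Prop) : Prop :=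
  exists x0 y0, adj x0 y0 /\ heq J (hyperplane_of x0 y0).

Definition transverse (J1 J2 : V -> V -> Prop) : Prop :=
  exists a b c d, square a b c d /\ J1 a b /\ J2 b c.

Definition in_carrier (J : V -> V -> Prop) (v : V) : Prop :=
  exists w, J v w \/ J w v.

Definition tangent (J1 J2 : V -> V -> Prop) : Prop :=
  ~ heq J1 J2 /\ ~ transverse J1 J2 /\
  exists v, in_carrier J1 v /\ in_carrier J2 v.

(** u and v lie in the same sector of J: connected in X minus the
    interiors of the edges of J *)
Definition same_sector (J : V -> V -> Prop) : relation V :=
  clos_refl_trans V (fun x y => adj x y /\ ~ J x y).

End Graphs.

Definition is_group (G : Type) (mul : G -> G -> G) (e : G) (inv : G -> G) : Prop :=
  (forall a b c, mul a (mul b c) = mul (mul a b) c) /\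
  (forall a, mul e a = a) /\ (forall a, mul a e = a) /\
  (forall a, mul (inv a) a = e) /\ (forall a, mul a (inv a) = e).

Definition is_graph_action (V : Type) (adj : V -> V -> Prop)
  (G : Type) (mul : G -> G -> G) (e : G) (act : G -> V -> V) : Prop :=
  (forall x, act e x = x) /\
  (forall g h x, act (mul g h) x = act g (act h x)) /\
  (forall g x y, adj x y <-> adj (act g x) (act g y)).

Definition faithful (V G : Type) (e : G) (act : G -> V -> V) : Prop :=
  forall g, (forall x, act g x = x) -> g = e.

Definition himg (V G : Type) (act : G -> V -> V) (g : G) (J : V -> V -> Prop)
  : V -> V -> Prop :=
  fun x y => exists x' y', J x' y' /\ act g x' = x /\ act g y' = y.

Definition hyperplane_special (V : Type) (adj : V -> V -> Prop)
  (G : Type) (e : G) (act : G -> V -> V) : Prop :=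
  faithful e act /\
  (forall J g, is_hyperplane adj J -> ~ heq (himg act g J) J ->
     ~ transverse adj J (himg act g J) /\ ~ tangent adj J (himg act g J)) /\
  (forall J1 J2 g, is_hyperplane adj J1 -> is_hyperplane adj J2 ->
     transverse adj J1 J2 -> ~ tangent adj J1 (himg act g J2)).

(** The action of the image of stab(J) on the sectors of J is free: the
    permutation of sectors induced by g in stab(J) is either the identity
    or has no fixed sector. *)
Definition sector_action_free (V : Type) (adj : V -> V -> Prop)
  (G : Type) (act : G -> V -> V) : Prop :=
  forall J g, is_hyperplane adj J -> heq (himg act g J) J ->
    (exists u, same_sector adj J u (act g u)) ->
    forall v, same_sector adj J v (act g v).

Definition special_action (V : Type) (adj : V -> V -> Prop)
  (G : Type) (e : G) (act : G -> V -> V) : Prop :=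
  hyperplane_special adj e act /\ sector_action_free adj act.

(* Main.v *)
Require Import Defs.
From Stdlib Require Import Relations Arith.
From Stdlib Require Import Lia Classical.
Set Implicit Arguments.

Lemma walk_snoc V (adj : V -> V -> Prop) n x y z :
  walk adj n x y -> adj y z -> walk adj (S n) x z.
Proof.
  induction 1; intro Hyz.
  - econstructor; [eassumption| constructor].
  - econstructor; [eassumption| auto].
Qed.

Lemma walk_rev V (adj : V -> V -> Prop) n x y :
  (forall a b, adj a b -> adj b a) -> walk adj n x y -> walk adj n y x.
Proof.
  intros Hs. induction 1.
  - constructor.
  - eapply walk_snoc; eauto.
Qed.

Lemma dist_sym V (adj : V -> V -> Prop) x y n :
  (forall a b, adj a b -> adj b a) -> dist adj x y n -> dist adj y x n.
Proof.
  intros Hs [H1 H2]. split.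
  - apply walk_rev; auto.
  - intros m Hm. apply H2. apply walk_rev; auto.
Qed.

Lemma least_nat (P : nat -> Prop) :
  (exists n, P n) -> exists n, P n /\ forall m, P m -> n <= m.
Proof.
  intros [n Hn]. revert Hn. induction n as [n IH] using lt_wf_ind. intros Hn.
  destruct (classic (exists m, P m /\ m < n)) as [[m [Pm Hm]]|Hno].
  - exact (IH m Hm Pm).
  - exists n. split; auto. intros m Pm. destruct (le_lt_dec n m); auto.
    exfalso; apply Hno; eauto.
Qed.

Lemma dist_exists V (adj : V -> V -> Prop) x y :
  connected adj -> exists n, dist adj x y n.
Proof.
  intros Hc. destruct (least_nat (fun n => walk adj n x y) (Hc x y)) as [n [H1 H2]].
  exists n. split; auto.
Qed.

Lemma dist_unique V (adj : V -> V -> Prop) x y n m :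
  dist adj x y n -> dist adj x y m -> n = m.
Proof. intros [H1 H2] [H3 H4]. apply H2 in H3; apply H4 in H1; lia. Qed.

Lemma dist0 V (adj : V -> V -> Prop) x y : dist adj x y 0 -> x = y.
Proof. intros [H _]. inversion H. reflexivity. Qed.

Lemma dist_step V (adj : V -> V -> Prop) x y n :
  dist adj x y (S n) -> exists z, adj x z /\ dist adj z y n.
Proof.
  intros [H1 H2]. inversion H1; subst. exists z. split; auto. split; auto.
  intros m Hm. assert (S n <= S m) by (apply H2; econstructor; eauto). lia.
Qed.

Lemma lip V (adj : V -> V -> Prop) x y b n m :
  adj y x -> dist adj x b n -> dist adj y b m -> m <= S n.
Proof. intros Hyx [H1 _] [_ H2]. apply H2. econstructor; eauto. Qed.

Lemma lip_end V (adj : V -> V -> Prop) x b c n m :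
  adj b c -> dist adj x b n -> dist adj x c m -> m <= S n.
Proof. intros Hbc [H1 _] [_ H2]. apply H2. eapply walk_snoc; eauto. Qed.

Lemma dist_one V (adj : V -> V -> Prop) x y :
  (forall a, ~ adj a a) -> adj x y -> dist adj x y 1.
Proof.
  intros Hirr Hxy. split.
  - econstructor; [eassumption| constructor].
  - intros m Hm. destruct m; [|lia]. inversion Hm; subst. exfalso; eapply Hirr; eauto.
Qed.

Lemma dist_refl V (adj : V -> V -> Prop) x : dist adj x x 0.
Proof. split; [constructor| intros; lia]. Qed.

Lemma flip V (adj : V -> V -> Prop) (v w a b : V) :
  adj a b -> adj b a -> hequiv adj (v,w) (a,b) -> hequiv adj (v,w) (b,a).
Proof.
  intros Hab Hba H. eapply rt_trans; [exact H|]. apply rt_step.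
  split; [exact Hab|]. split; [exact Hba|]. left. right. simpl; auto.
Qed.

Lemma tri_step V (adj : V -> V -> Prop) (e f : V*V) a b c :
  adj (fst e) (snd e) -> adj (fst f) (snd f) -> triangle adj a b c ->
  is_side_of_triangle e a b c -> is_side_of_triangle f a b c -> hrel adj e f.
Proof. intros; split; [|split]; auto. right; left. exists a, b, c; auto. Qed.

Lemma sq_step V (adj : V -> V -> Prop) (e f : V*V) a b c d :
  adj (fst e) (snd e) -> adj (fst f) (snd f) -> square adj a b c d ->
  same_edge e (a,b) -> same_edge f (c,d) -> hrel adj e f.
Proof. intros; split; [|split]; auto. right; right. exists a, b, c, d; auto. Qed.

Definition PA V (adj : V -> V -> Prop) v w n := forall a b, adj a b ->
  dist adj a w n -> dist adj a v (S n) -> dist adj b v n -> dist adj b w (S n) ->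
  hequiv adj (v,w) (a,b).
Definition PB V (adj : V -> V -> Prop) v w n := forall a b, adj a b ->
  dist adj a w n -> dist adj a v (S n) -> dist adj b v n -> dist adj b w n ->
  hequiv adj (v,w) (a,b).
Definition PC V (adj : V -> V -> Prop) v w n := forall a b, adj a b ->
  dist adj a w n -> dist adj a v (S n) -> dist adj b v (S n) -> dist adj b w (S n) ->
  hequiv adj (v,w) (a,b).


Lemma A0 V (adj : V -> V -> Prop) v w : adj v w -> PA adj v w 0.
Proof.
  intros Hvw a b Hab Haw Hav Hbv Hbw. apply dist0 in Haw; apply dist0 in Hbv.
  subst a b. apply rt_step. split; [exact Hvw|]. split; [exact Hab|]. left. right. simpl; auto.
Qed.

Lemma B0 V (adj : V -> V -> Prop) v w : (forall a, ~ adj a a) -> PB adj v w 0.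
Proof.
  intros Hirr a b Hab Haw Hav Hbv Hbw. apply dist0 in Haw; apply dist0 in Hbw.
  subst a b. exfalso; eapply Hirr; eauto.
Qed.

Lemma C_gen V (adj : V -> V -> Prop) v w n :
  (forall x y, adj x y -> adj y x) -> triangle_condition adj -> connected adj ->
  PA adj v w n -> PB adj v w n -> PC adj v w n.
Proof.
  intros Hsym Htri Hconn HA HB a b Hab Haw Hav Hbv Hbw.
  destruct (Htri v a b (S n) Hab (dist_sym Hsym Hav) (dist_sym Hsym Hbv))
    as [z [Hza [Hzb Hvz]]].
  replace (S n - 1) with n in Hvz by lia.
  apply (dist_sym Hsym) in Hvz.
  destruct (dist_exists z w Hconn) as [p Hzw].
  assert (S n <= S p) by (eapply lip; [apply Hsym; exact Hzb| exact Hzw| exact Hbw]).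
  assert (p <= S n) by (eapply lip; [exact Hza| exact Haw| exact Hzw]).
  assert (Haz : hequiv adj (v,w) (a,z)).
  { destruct (Nat.eq_dec p n) as [->|Hne].
    - apply HB; auto.
    - assert (p = S n) as -> by lia. apply HA; auto. }
  eapply rt_trans; [exact Haz|]. apply rt_step.
  apply tri_step with a z b; simpl; auto;
    try (unfold triangle; repeat split; auto; fail);
    unfold is_side_of_triangle, same_edge; simpl; auto 7.
Qed.

Lemma B_succ V (adj : V -> V -> Prop) v w k :
  (forall x y, adj x y -> adj y x) -> triangle_condition adj -> connected adj ->
  adj v w -> PC adj v w k -> PB adj v w (S k).
Proof.
  intros Hsym Htri Hconn Hvw HC a b Hab Haw Hav Hbv Hbw.
  destruct (Htri w a b (S k) Hab (dist_sym Hsym Haw) (dist_sym Hsym Hbw))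
    as [z [Hza [Hzb Hwz]]].
  replace (S k - 1) with k in Hwz by lia.
  apply (dist_sym Hsym) in Hwz.
  destruct (dist_exists z v Hconn) as [p Hzv].
  assert (S (S k) <= S p) by (eapply lip; [apply Hsym; exact Hza| exact Hzv| exact Hav]).
  assert (p <= S k) by (eapply lip_end; [apply Hsym; exact Hvw| exact Hwz| exact Hzv]).
  assert (p = S k) as -> by lia.
  assert (Hz : hequiv adj (v,w) (z,b)) by (apply HC; auto).
  eapply rt_trans; [exact Hz|]. apply rt_step.
  apply tri_step with z a b; simpl; auto;
    try (unfold triangle; repeat split; auto; fail);
    unfold is_side_of_triangle, same_edge; simpl; auto 7.
Qed.

Lemma A_succ V (adj : V -> V -> Prop) v w k :
  (forall x y, adj x y -> adj y x) -> quadrangle_condition adj -> connected adj ->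
  adj v w -> PA adj v w k -> PA adj v w (S k).
Proof.
  intros Hsym Hquad Hconn Hvw HA a b Hab Haw Hav Hbv Hbw.
  destruct (dist_step Haw) as [a' [Haa' Ha'w]].
  destruct (dist_exists a' v Hconn) as [m Ha'v].
  assert (m <= S k) by (eapply lip_end; [apply Hsym; exact Hvw| exact Ha'w| exact Ha'v]).
  assert (S (S k) <= S m) by (eapply lip; [exact Haa'| exact Ha'v| exact Hav]).
  assert (m = S k) as -> by lia.
  assert (Hne : a' <> b).
  { intro E; subst a'. pose proof (dist_unique Ha'w Hbw). lia. }
  destruct (Hquad v a' b a (S k) Hne Haa' Hab (dist_sym Hsym Ha'v)
              (dist_sym Hsym Hbv) (dist_sym Hsym Hav)) as [c [Hca' [Hcb Hvc]]].
  replace (S k - 1) with k in Hvc by lia.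
  apply (dist_sym Hsym) in Hvc.
  destruct (dist_exists c w Hconn) as [p Hcw].
  assert (p <= S k) by (eapply lip; [exact Hca'| exact Ha'w| exact Hcw]).
  assert (S (S k) <= S p) by (eapply lip; [apply Hsym; exact Hcb| exact Hcw| exact Hbw]).
  assert (p = S k) as -> by lia.
  assert (Hac : hequiv adj (v,w) (a',c)) by (apply HA; auto).
  apply flip; auto.
  eapply rt_trans; [exact Hac|]. apply rt_step.
  apply sq_step with a' c b a; simpl; auto.
  - repeat split; auto.
    + intro E; subst c. pose proof (dist_unique Hvc Hav). lia.
    + intro Hab'. assert (S (S k) <= S k) by (eapply lip; [apply Hsym; exact Hab'| exact Ha'w| exact Hbw]). lia.
    + intro Hca. assert (S (S k) <= S k) by (eapply lip; [apply Hsym; exact Hca| exact Hvc| exact Hav]). lia.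
  - unfold same_edge; simpl; auto.
  - unfold same_edge; simpl; auto.
Qed.

Lemma DW V (adj : V -> V -> Prop) v w :
  (forall x y, adj x y -> adj y x) -> (forall x, ~ adj x x) ->
  triangle_condition adj -> quadrangle_condition adj -> connected adj ->
  adj v w -> forall n, PA adj v w n /\ PB adj v w n /\ PC adj v w n.
Proof.
  intros Hsym Hirr Htri Hquad Hconn Hvw n. induction n as [|k [IA [IB IC]]].
  - assert (HA := A0 Hvw). assert (HB := @B0 V adj v w Hirr).
    split; [|split]; auto. apply C_gen; auto.
  - assert (HA := A_succ Hsym Hquad Hconn Hvw IA).
    assert (HB := B_succ Hsym Htri Hconn Hvw IC).
    split; [|split]; auto. apply C_gen; auto.
Qed.

Definition inW V (adj : V -> V -> Prop) v w x := exists n, dist adj x w n /\ dist adj x v (S n).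

Lemma sep1 V (adj : V -> V -> Prop) v w x y :
  (forall x y, adj x y -> adj y x) -> (forall x, ~ adj x x) ->
  triangle_condition adj -> quadrangle_condition adj -> connected adj ->
  adj v w -> adj x y -> inW adj v w x -> ~ inW adj v w y -> hequiv adj (v,w) (x,y).
Proof.
  intros Hsym Hirr Htri Hquad Hconn Hvw Hxy [n [Hxw Hxv]] Hny.
  destruct (dist_exists y w Hconn) as [p Hyw].
  destruct (dist_exists y v Hconn) as [q Hyv].
  assert (p <= S n) by (eapply lip; [apply Hsym; exact Hxy| exact Hxw| exact Hyw]).
  assert (n <= S p) by (eapply lip; [exact Hxy| exact Hyw| exact Hxw]).
  assert (q <= S (S n)) by (eapply lip; [apply Hsym; exact Hxy| exact Hxv| exact Hyv]).
  assert (S n <= S q) by (eapply lip; [exact Hxy| exact Hyv| exact Hxv]).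
  assert (q <= S p) by (eapply lip_end; [apply Hsym; exact Hvw| exact Hyw| exact Hyv]).
  assert (p <= S q) by (eapply lip_end; [exact Hvw| exact Hyv| exact Hyw]).
  assert (q <> S p) by (intro E; subst q; apply Hny; exists p; auto).
  destruct (@DW V adj v w Hsym Hirr Htri Hquad Hconn Hvw n) as [HA [HB HC]].
  assert (HH : (q = n /\ p = S n) \/ (q = n /\ p = n) \/ (q = S n /\ p = S n)) by lia.
  destruct HH as [[-> ->]|[[-> ->]|[-> ->]]]; [apply HA|apply HB|apply HC]; auto.
Qed.

Lemma sector_inv V (adj : V -> V -> Prop) v w x y :
  (forall x y, adj x y -> adj y x) -> (forall x, ~ adj x x) ->
  triangle_condition adj -> quadrangle_condition adj -> connected adj ->
  adj v w -> same_sector adj (hyperplane_of adj v w) x y ->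
  (inW adj v w x <-> inW adj v w y).
Proof.
  intros Hsym Hirr Htri Hquad Hconn Hvw H. induction H as [x y [Hxy HJ]| |].
  - split; intro Hi; apply NNPP; intro Hn; apply HJ; unfold hyperplane_of; split; auto.
    + eapply sep1; eauto.
    + apply flip; auto. eapply sep1; eauto.
  - tauto.
  - tauto.
Qed.

Lemma neighbor_sep V (adj : V -> V -> Prop) v w u :
  (forall x y, adj x y -> adj y x) -> (forall x, ~ adj x x) ->
  triangle_condition adj -> quadrangle_condition adj -> connected adj ->
  adj v w -> adj v u -> u <> w ->
  same_sector adj (hyperplane_of adj v w) w u -> False.
Proof.
  intros Hsym Hirr Htri Hquad Hconn Hvw Hvu Hne Hs.
  assert (Hw : inW adj v w w) by (exists 0; split; [apply dist_refl| apply dist_one; auto]).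
  apply (sector_inv Hsym Hirr Htri Hquad Hconn Hvw Hs) in Hw.
  destruct Hw as [n [Huw Huv]].
  pose proof (dist_unique Huv ((@dist_one V adj u v Hirr (Hsym _ _ Hvu)))).
  assert (n = 0) as -> by lia. apply dist0 in Huw. auto.
Qed.

Theorem lemma3p4 (V : Type) (adj : V -> V -> Prop)
  (G : Type) (mul : G -> G -> G) (e : G) (inv : G -> G) (act : G -> V -> V) :
  is_group mul e inv ->
  quasi_median adj ->
  is_graph_action adj mul e act ->
  special_action adj e act ->
  forall (v : V) (g : G), act g v = v -> g = e.
Proof.
  intros Hgrp [[Hsym Hirr] [Hconn [_ [_ [Htri Hquad]]]]] [Hact_e [Hact_mul Hact_adj]]
    [[Hfaith [H1 H2]] Hfree] v g Hgv.
  apply Hfaith.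
  assert (Hnb : forall x, act g x = x -> forall y, adj x y -> act g y = y).
  { intros x Hx y Hxy.
    assert (HJ : is_hyperplane adj (hyperplane_of adj x y))
      by (exists x, y; split; [exact Hxy| intros a b; reflexivity]).
    assert (Hheq : heq (himg act g (hyperplane_of adj x y)) (hyperplane_of adj x y)).
    { destruct (classic (heq (himg act g (hyperplane_of adj x y)) (hyperplane_of adj x y)))
        as [h|h]; [exact h|].
      destruct (H1 _ g HJ h) as [Ht Htg]. exfalso; apply Htg. split; [|split].
      - intro h'. apply h. intros a b. symmetry. apply h'.
      - exact Ht.
      - exists x. split.
        + exists y. left. split; [exact Hxy| apply rt_refl].
        + exists (act g y). left. exists x, y.
          split; [split; [exact Hxy|apply rt_refl]|]. split; [exact Hx|reflexivity]. }
    assert (Hex : exists u, same_sector adj (hyperplane_of adj x y) u (act g u))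
      by (exists x; rewrite Hx; apply rt_refl).
    pose proof (Hfree _ g HJ Hheq Hex y) as Hs.
    assert (Hxgy : adj x (act g y)) by (rewrite <- Hx at 1; apply Hact_adj; exact Hxy).
    destruct (classic (act g y = y)) as [E|E]; [exact E|].
    exfalso. exact (@neighbor_sep V adj x y (act g y) Hsym Hirr Htri Hquad Hconn Hxy Hxgy E Hs). }
  intros x. destruct (Hconn v x) as [n Hw].
  revert Hgv. induction Hw; intros Hgv; auto.
  apply IHHw. eapply Hnb; eauto.
Qed.
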